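(* For every integer $n\ge2$ and every integer $k\ge0$, \[ d_{n,k}=\sum_{j=0}^{k}\binom{j+1}{n-k-j}\left(\binom{n-2j-1}{k-j}+\binom{n-2j-3}{k-j-2}\right). \]
   Context: For $n\ge1$ let $\Xi_n$ be the poset on $\{x_1,\dots,x_n\}$ whose cover relations are exactly: $x_2\prec x_1$, $x_3\prec x_2$, and for $3\le i\le n-1$, $x_i\prec x_{i+1}$ if $i$ is odd and $x_{i+1}\prec x_i$ if $i$ is even (so $x_1>x_2>x_3<x_4>x_5<\cdots$). A filter of a poset is an up-closed subset. The matchable Lucas cube $\Omega_n$ is the graph whose vertices are the filters of $\Xi_n$, two filters adjacent iff one is obtained from the other by deleting a single element. $d_{n,k}$ is the number of vertices of degree $k$ in $\Omega_n$. Binomial coefficients: for an integer $a$ and integer $b\ge0$, $\binom ab=a(a-1)\cdots(a-b+1)/b!$ (so $\binom a0=1$ for all integers $a$, and $\binom ab=0$ if $0\le a<b$); $\binom ab=0$ if $b<0$. *)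

(* Defs.v *)
From mathcomp Require Import all_boot all_order all_algebra.
Set Implicit Arguments. Unset Strict Implicit. Unset Printing Implicit Defensive.
Import GRing.Theory Num.Theory.

(* Elements x_1,...,x_n of Xi_n are represented by i : 'I_n, with i <-> x_(i+1). *)

(* xi_cover n a b : the cover relation  x_(a+1) < x_(b+1)  (a is covered by b). *)
Definition xi_cover (n : nat) : rel 'I_n := fun a b =>
  let p := (a : nat).+1 in let q := (b : nat).+1 in
  [|| (p == 2) && (q == 1),
      (p == 3) && (q == 2),
      [&& 3 <= p, odd p & q == p.+1]
    | [&& 3 <= q, ~~ odd q & p == q.+1] ].

Definition xi_le (n : nat) : rel 'I_n := connect (@xi_cover n).

Definition is_filter (n : nat) (F : {set 'I_n}) : bool :=
  [forall a, forall b, (a \in F) && xi_le a b ==> (b \in F)].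

Definition omega_adj (n : nat) (F G : {set 'I_n}) : bool :=
  [exists x, ((x \in F) && (G == F :\ x)) || ((x \in G) && (F == G :\ x))].

Definition omega_deg (n : nat) (F : {set 'I_n}) : nat :=
  #|[set G : {set 'I_n} | is_filter G && omega_adj F G]|.

Definition d (n k : nat) : nat :=
  #|[set F : {set 'I_n} | is_filter F && (omega_deg F == k)]|.

Definition binz (a b : int) : int :=
  match b with
  | Posz m => ((\prod_(i < m) (a - (i : nat)%:Z)) %/ (m`!)%:Z)%Z
  | Negz _ => 0
  end.

(* Main.v *)
Require Import Defs.
From mathcomp Require Import all_boot all_order all_algebra.
From mathcomp Require Import ring lra zify.
Import GRing.Theory Num.Theory.
Local Open Scope ring_scope.

Lemma prod_pos (a b : nat) : \prod_(i < b) (a%:Z - (i : nat)%:Z) = (a ^_ b)%N%:Z.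
Proof.
elim: b => [|b IH]; first by rewrite big_ord0 ffactn0.
rewrite big_ord_recr /= IH ffactnSr PoszM.
case: (leqP b a) => hb; first by rewrite subzn.
by rewrite ffact_small // mul0r.
Qed.

Lemma prod_neg (c b : nat) :
  \prod_(i < b) (Negz c - (i : nat)%:Z) = (-1) ^+ b * ((c + b) ^_ b)%N%:Z.
Proof.
elim: b => [|b IH]; first by rewrite big_ord0 ffactn0 expr0 mulr1.
rewrite big_ord_recr /= IH addnS ffactSS PoszM NegzE exprS.
rewrite -[(c + b).+1]addn1 PoszD; ring.
Qed.

Lemma binz_pos (a b : nat) : binz a b = ('C(a, b))%:Z.
Proof.
rewrite /binz prod_pos -bin_ffact PoszM mulzK //.
by rewrite eqz_nat -lt0n fact_gt0.
Qed.

Lemma binz_negb (a : int) (c : nat) : binz a (Negz c) = 0.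
Proof. by []. Qed.

Lemma binz_nega (c b : nat) : binz (Negz c) b = (-1) ^+ b * ('C(c + b, b))%:Z.
Proof.
rewrite /binz prod_neg -bin_ffact PoszM mulrA mulzK //.
by rewrite eqz_nat -lt0n fact_gt0.
Qed.

Lemma binz_lt0 (a b : int) : b < 0 -> binz a b = 0.
Proof. by case: b. Qed.

Lemma binzS (a b : int) : binz a b = binz (a - 1) b + binz (a - 1) (b - 1).
Proof.
case: b => [[|b]|b].
- rewrite (@binz_lt0 (a - 1) (0 - 1)) // addr0.
  by rewrite /binz !big_ord0 !divz1.
- have -> : (Posz b.+1 - 1) = Posz b by rewrite -addn1 PoszD addrK.
  case: a => [[|a]|c].
  + rewrite (_ : Posz 0 - 1 = Negz 0) // !binz_nega binz_pos bin0n /=.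
    rewrite !add0n !binn exprS; ring.
  + rewrite (_ : Posz a.+1 - 1 = Posz a); last by rewrite -addn1 PoszD addrK.
    by rewrite !binz_pos binS PoszD.
  + rewrite (_ : Negz c - 1 = Negz c.+1); last by rewrite !NegzE; ring.
    rewrite !binz_nega.
    rewrite (_ : (c.+1 + b.+1 = (c + b.+1).+1)%N) ?binS ?PoszD ?exprS; last by lia.
    rewrite (_ : (c.+1 + b = c + b.+1)%N); last by lia.
    ring.
- rewrite !binz_lt0 //.
Qed.
Definition g (n k j : int) : int :=
  binz (j + 1) (n - k - j) *
     (binz (n - 2 * j - 1) (k - j) + binz (n - 2 * j - 3) (k - j - 2)).

Lemma core (u r m l : int) :
  binz u r * (binz (m - 1) l + binz (m - 3) (l - 2)) =
  binz u r * (binz (m - 2) (l - 1) + binz (m - 4) (l - 3))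
  + binz (u - 1) r * (binz (m - 1) l + binz (m - 3) (l - 2))
  + binz (u - 1) (r - 1) * (binz (m - 2) l + binz (m - 4) (l - 2))
  - binz (u - 1) r * (binz (m - 2) (l - 1) + binz (m - 4) (l - 3)).
Proof.
rewrite [binz u r]binzS [binz (m - 1) l]binzS [binz (m - 3) (l - 2)]binzS.
rewrite (_ : m - 1 - 1 = m - 2); last by ring.
rewrite (_ : m - 3 - 1 = m - 4); last by ring.
rewrite (_ : l - 2 - 1 = l - 3); last by ring.
ring.
Qed.

Lemma g_rec (n k j : int) :
  g n k j = g (n - 1) (k - 1) j + g (n - 2) (k - 1) (j - 1)
            + g (n - 3) (k - 1) (j - 1) - g (n - 3) (k - 2) (j - 1).
Proof.
rewrite /g core.
congr (_ + _ + _ - _); congr (binz _ _ * (binz _ _ + binz _ _)); ring.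
Qed.
Definition S (n k : nat) : int := \sum_(0 <= j < k.+1) g n%:Z k%:Z j%:Z.

Lemma g_vanish (n k j : int) : k < j -> g n k j = 0.
Proof.
move=> h; rewrite /g (@binz_lt0 _ (k - j)); last by lia.
by rewrite (@binz_lt0 _ (k - j - 2)) ?addr0 ?mulr0 //; lia.
Qed.

Lemma S_ext (n k N : nat) : (k < N)%N ->
  S n k = \sum_(0 <= j < N) g n%:Z k%:Z j%:Z.
Proof.
move=> hN; rewrite /S [RHS](big_cat_nat _ (n:=k.+1)) //=.
rewrite [X in _ = _ + X]big_nat_cond [X in _ = _ + X]big1 ?addr0 // => j /andP[/andP[hj _] _].
by apply: g_vanish; lia.
Qed.

Lemma binz0n (b : int) : b != 0 -> binz 0 b = 0.
Proof.
case: b => [[|b]|b] // _; first by rewrite binz_pos bin0n.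
Qed.

Lemma gm1 (m l : nat) : (1 <= m)%N -> g m%:Z l%:Z (-1) = 0.
Proof.
move=> hm; rewrite /g.
have [->|hl] := eqVneq l m.+1.
  rewrite (_ : m%:Z - 2 * -1 - 1 = (m.+1)%:Z); last by lia.
  rewrite (_ : (m.+1)%:Z - -1 = (m.+2)%:Z); last by lia.
  rewrite (_ : m%:Z - 2 * -1 - 3 = (m.-1)%:Z); last by lia.
  rewrite (_ : (m.+2)%:Z - 2 = (m)%:Z); last by lia.
  rewrite !binz_pos !bin_small ?addr0 ?mulr0 //; lia.
rewrite binz0n ?mul0r //; lia.
Qed.

Lemma shift (m l : int) (N : nat) :
  \sum_(0 <= j < N.+1) g m l (j%:Z - 1) = g m l (-1) + \sum_(0 <= j < N) g m l j%:Z.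
Proof.
rewrite big_nat_recl //; congr (_ + _); apply: eq_bigr => i _; congr g; lia.
Qed.

Lemma S_rec (n k : nat) : (1 <= n)%N ->
  S n.+3 k.+2 = S n.+2 k.+1 + S n.+1 k.+1 + S n k.+1 - S n k.
Proof.
move=> hn.
have E : forall j : nat, g n.+3%:Z k.+2%:Z j%:Z =
   g n.+2%:Z k.+1%:Z j%:Z + g n.+1%:Z k.+1%:Z (j%:Z - 1)
   + g n%:Z k.+1%:Z (j%:Z - 1) - g n%:Z k%:Z (j%:Z - 1).
  move=> j; rewrite g_rec; congr (g _ _ _ + g _ _ _ + g _ _ _ - g _ _ _); lia.
rewrite /S (eq_bigr _ (fun j _ => E j)) !sumrB !big_split /=.
rewrite -/(S n.+2 k.+1) -(@S_ext n.+2 k.+1 k.+3) //.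
rewrite !shift !gm1 // ?add0r -!S_ext //; lia.
Qed.

Lemma S_n0 (n : nat) : (2 <= n)%N -> S n 0 = 0.
Proof.
move=> hn; rewrite /S big_nat1 /g.
rewrite (_ : (0%:Z + 1) = 1%:Z) // (_ : n%:Z - 0%:Z - 0%:Z = n%:Z); last by lia.
by rewrite binz_pos bin_small ?mul0r.
Qed.

Lemma S_n1 (n : nat) : (5 <= n)%N -> S n 1 = 0.
Proof.
move=> hn; rewrite /S big_nat_recr //= big_nat1 /g.
rewrite (_ : (0%:Z + 1) = 1%:Z) // (_ : n%:Z - 1%:Z - 0%:Z = (n.-1)%:Z); last by lia.
rewrite (_ : (1%:Z + 1) = 2%:Z) // (_ : n%:Z - 1%:Z - 1%:Z = (n.-2)%:Z); last by lia.
by rewrite !binz_pos !bin_small ?mul0r ?add0r //; lia.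
Qed.

Lemma S_big (n k : nat) : (n < k)%N -> S n k = 0.
Proof.
move=> h; rewrite /S big_nat_cond big1 // => j _.
by rewrite /g binz_lt0 ?mul0r //; lia.
Qed.
Definition lowerR (i : nat) : bool := (i == 0)%N || odd i.
Definition covN (a b : nat) : bool :=
  ((b == a.+1) && ~~ lowerR a) || ((a == b.+1) && lowerR b).

Lemma covNE (a b : nat) :
  [|| (a.+1 == 2) && (b.+1 == 1),
      (a.+1 == 3) && (b.+1 == 2),
      [&& 3 <= a.+1, odd a.+1 & b.+1 == a.+2]%N
    | [&& 3 <= b.+1, ~~ odd b.+1 & a.+1 == b.+2]%N ] = covN a b.
Proof.
rewrite /covN /lowerR.
case: a => [|[|[|a]]]; case: b => [|[|[|b]]] //=; rewrite ?negbK //.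
all: rewrite ?eqSS ?andbT ?andbF ?orbF //=.
by rewrite andbC [X in _ || X]andbC.
Qed.

Lemma xi_coverE n (a b : 'I_n) : xi_cover a b = covN a b.
Proof. exact: covNE. Qed.
Lemma covN_irr a : covN a a = false.
Proof. by rewrite /covN (ltn_eqF (ltnSn a)). Qed.

Definition filtI n (F : {set 'I_n}) :=
  forall a b : 'I_n, covN a b -> a \in F -> b \in F.

Arguments filtI {n}.

Lemma is_filterP n (F : {set 'I_n}) : reflect (filtI F) (is_filter F).
Proof.
apply: (iffP idP).
  move=> H a b cab aF; move/forallP: H => /(_ a) /forallP /(_ b) /implyP; apply.
  by rewrite aF /xi_le connect1 // xi_coverE.
move=> H; apply/forallP => a; apply/forallP => b; apply/implyP => /andP[aF].
move=> /connectP[p pth ->] {b}.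
elim: p a aF pth => [|c p IH] a aF //= /andP[cac pth].
by apply: (IH c) => //; apply: (H a c) => //; rewrite -xi_coverE.
Qed.

Definition minc n (F : {set 'I_n}) (x : 'I_n) :=
  [forall a : 'I_n, covN a x ==> (a \notin F)].
Definition maxc n (F : {set 'I_n}) (x : 'I_n) :=
  [forall b : 'I_n, covN x b ==> (b \in F)].

Arguments minc {n}.
Arguments maxc {n}.

Lemma filt_del n (F : {set 'I_n}) x : filtI F -> x \in F ->
  is_filter (F :\ x) = minc F x.
Proof.
move=> hF xF; apply/is_filterP/forallP.
  move=> H a; apply/implyP => cax; apply/negP => aF.
  have : x \in F :\ x by apply: (H a) => //; rewrite !inE aF andbT;
    apply/eqP => ax; move: cax; rewrite ax covN_irr.
  by rewrite setD11.
move=> H a b cab; rewrite !inE => /andP[ax aF]; rewrite (hF a b) // andbT.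
apply/eqP => bx; move: (H a); rewrite -bx cab /= aF //.
Qed.

Lemma filt_add n (F : {set 'I_n}) x : filtI F -> x \notin F ->
  is_filter (x |: F) = maxc F x.
Proof.
move=> hF xF; apply/is_filterP/forallP.
  move=> H b; apply/implyP => cxb.
  have : b \in x |: F by apply: (H x) => //; rewrite setU11.
  by rewrite !inE => /orP[/eqP bx|//]; move: cxb; rewrite bx covN_irr.
move=> H a b cab; rewrite !inE => /orP[/eqP ax|aF].
  by move: (H b); rewrite -ax cab /= => ->; rewrite orbT.
by rewrite (hF a b) // orbT.
Qed.

Lemma omega_degE n (F : {set 'I_n}) : is_filter F ->
  omega_deg F = \sum_(x : 'I_n) ((if x \in F then minc F x else maxc F x) : nat).
Proof.
move=> /is_filterP hF.
pose fF x := if x \in F then F :\ x else x |: F.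
pose X := [set x | if x \in F then minc F x else maxc F x].
have inj : injective fF.
  move=> x y; rewrite /fF.
  case xF: (x \in F); case yF: (y \in F) => /setP E.
  - by move: (E x); rewrite !inE eqxx xF /= andbT => /esym/negbFE/eqP.
  - by move: (E y); rewrite !inE eqxx yF /= andbF.
  - by move: (E x); rewrite !inE eqxx xF /= andbF.
  - by move: (E x); rewrite !inE eqxx xF /= orbF => /esym/eqP.
rewrite /omega_deg.
have -> : [set G : {set 'I_n} | is_filter G && omega_adj F G] = fF @: X.
  apply/setP => G; rewrite inE; apply/andP/imsetP.
    move=> [fG /existsP[x /orP[/andP[xF /eqP GE]|/andP[xG /eqP FE]]]].
      exists x; last by rewrite /fF xF.
      by rewrite inE xF -filt_del // -GE.
    have xF : x \notin F by rewrite FE setD11.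
    have GE : G = x |: F by rewrite FE setD1K.
    exists x; last by rewrite /fF (negbTE xF).
    by rewrite inE (negbTE xF) -filt_add // -GE.
  move=> [x]; rewrite inE /fF; case: ifP => xF xX ->.
    split; first by rewrite filt_del.
    by apply/existsP; exists x; rewrite xF eqxx.
  split; first by rewrite filt_add // xF.
  by apply/existsP; exists x; rewrite setU11 (setU1K (negbT xF)) eqxx orbT.
rewrite card_imset //.
rewrite -(@sum1_card _ (fun x => x \in X)) big_mkcond /=.
apply: eq_bigr => x _; rewrite inE.
by case: (x \in F); [case: (minc F x) | case: (maxc F x)].
Qed.
Definition B (s : seq bool) (i : nat) : bool := nth false s i.
Definition leftc (s : seq bool) (i : nat) : bool :=
  if B s i then ((0 < i)%N && ~~ lowerR i.-1 ==> ~~ B s i.-1)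
  else ((0 < i)%N && lowerR i.-1 ==> B s i.-1).
Definition rightc (s : seq bool) (i : nat) : bool :=
  if B s i then ((i.+1 < size s)%N && lowerR i ==> ~~ B s i.+1)
  else ((i.+1 < size s)%N && ~~ lowerR i ==> B s i.+1).
Definition term (s : seq bool) (i : nat) : bool := leftc s i && rightc s i.
Definition degL (s : seq bool) : nat := (\sum_(i < size s) term s i)%N.
Definition edgeok (s : seq bool) (i : nat) : bool :=
  if lowerR i then B s i.+1 ==> B s i else B s i ==> B s i.+1.
Definition filtL (s : seq bool) : bool := all (edgeok s) (iota 0 (size s).-1).

Definition bitF n (F : {set 'I_n}) (i : nat) : bool :=
  [exists x : 'I_n, (val x == i) && (x \in F)].
Arguments bitF {n}.
Definition seq_of n (F : {set 'I_n}) : seq bool := mkseq (bitF F) n.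
Arguments seq_of {n}.

Lemma size_seq_of n (F : {set 'I_n}) : size (seq_of F) = n.
Proof. exact: size_mkseq. Qed.

Arguments size_seq_of {n}.

Lemma B_seq_of n (F : {set 'I_n}) (x : 'I_n) : B (seq_of F) x = (x \in F).
Proof.
rewrite /B nth_mkseq // /bitF; apply/existsP/idP => [[y /andP[/eqP/val_inj -> //]]|xF].
by exists x; rewrite eqxx.
Qed.

Arguments B_seq_of {n}.

Lemma forall_lower n (P : nat -> bool) (x : 'I_n) :
  [forall a : 'I_n, covN a x ==> P a] =
  ((0 < x)%N && ~~ lowerR (x : nat).-1 ==> P (x : nat).-1) &&
  (((x : nat).+1 < n)%N && lowerR x ==> P (x : nat).+1).
Proof.
apply/forallP/andP => [H|[H1 H2] a].
  split; apply/implyP => /andP[h1 h2].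
    have hx : ((x : nat).-1 < n)%N by have := ltn_ord x; lia.
    move: (H (Ordinal hx)) => /implyP; apply.
    by rewrite /covN /= (prednK h1) eqxx h2.
  move: (H (Ordinal h1)) => /implyP; apply.
  by rewrite /covN /= eqxx h2 orbT.
apply/implyP; rewrite /covN => /orP[/andP[/eqP xa ha]|/andP[/eqP ax hx]].
  by move: H1; rewrite xa /= ha; exact: id.
by move: H2; rewrite -ax ltn_ord hx /=; exact: id.
Qed.

Lemma forall_upper n (P : nat -> bool) (x : 'I_n) :
  [forall b : 'I_n, covN x b ==> P b] =
  ((0 < x)%N && lowerR (x : nat).-1 ==> P (x : nat).-1) &&
  (((x : nat).+1 < n)%N && ~~ lowerR x ==> P (x : nat).+1).
Proof.
apply/forallP/andP => [H|[H1 H2] b].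
  split; apply/implyP => /andP[h1 h2].
    have hx : ((x : nat).-1 < n)%N by have := ltn_ord x; lia.
    move: (H (Ordinal hx)) => /implyP; apply.
    by rewrite /covN /= (prednK h1) eqxx h2 orbT.
  move: (H (Ordinal h1)) => /implyP; apply.
  by rewrite /covN /= eqxx h2.
apply/implyP; rewrite /covN => /orP[/andP[/eqP bx hb]|/andP[/eqP xb hx]].
  by move: H2; rewrite -bx ltn_ord hb /=; exact: id.
by move: H1; rewrite xb /= hx /=; exact: id.
Qed.

Lemma filt_seq n (F : {set 'I_n}) : is_filter F = filtL (seq_of F).
Proof.
apply/is_filterP/allP => [H i|H a b].
  rewrite mem_iota size_seq_of add0n => hi.
  have hi0 : (i < n)%N by lia.
  have hi1 : (i.+1 < n)%N by lia.
  have e0 : B (seq_of F) i = (Ordinal hi0 \in F) := B_seq_of F (Ordinal hi0).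
  have e1 : B (seq_of F) i.+1 = (Ordinal hi1 \in F) := B_seq_of F (Ordinal hi1).
  rewrite /edgeok e0 e1; case lr: (lowerR i); apply/implyP.
    by apply: H; rewrite /covN /= eqxx lr orbT.
  by apply: H; rewrite /covN /= eqxx lr.
rewrite /covN => /orP[/andP[/eqP ba ha]|/andP[/eqP ab hb]] aF.
  have : (a : nat) \in iota 0 (size (seq_of F)).-1.
    rewrite mem_iota size_seq_of; have := ltn_ord b; rewrite ba; lia.
  move/H; rewrite /edgeok (negbTE ha) -ba !B_seq_of aF; exact.
have : (b : nat) \in iota 0 (size (seq_of F)).-1.
  rewrite mem_iota size_seq_of; have := ltn_ord a; rewrite ab; lia.
move/H; rewrite /edgeok hb -ab !B_seq_of aF; exact.
Qed.

Lemma deg_seq n (F : {set 'I_n}) : is_filter F -> omega_deg F = degL (seq_of F).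
Proof.
move=> fF; rewrite omega_degE // /degL size_seq_of.
apply: eq_bigr => x _.
rewrite /term /leftc /rightc B_seq_of size_seq_of.
case xF: (x \in F).
  have -> : minc F x = [forall a : 'I_n, covN a x ==> (fun i => ~~ B (seq_of F) i) a].
    by apply: eq_forallb => a; rewrite B_seq_of.
  by rewrite (@forall_lower n (fun i => ~~ B (seq_of F) i) x).
have -> : maxc F x = [forall b : 'I_n, covN x b ==> (fun i => B (seq_of F) i) b].
  by apply: eq_forallb => a; rewrite B_seq_of.
by rewrite (@forall_upper n (fun i => B (seq_of F) i) x).
Qed.
Fixpoint allseq (m : nat) : seq (seq bool) :=
  if m is m'.+1 then
    [seq rcons s false | s <- allseq m'] ++ [seq rcons s true | s <- allseq m']
  else [:: [::]].

Lemma mem_allseq m s : (s \in allseq m) = (size s == m).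
Proof.
elim: m s => [|m IH] s; first by case: s.
rewrite /= mem_cat; case/lastP: s => [|s c].
  apply/negbTE; apply/negP => /orP[] /mapP[t _] /esym/eqP; by rewrite -size_eq0 size_rcons.
rewrite size_rcons eqSS -IH; case: c.
  apply/orP/idP => [[] /mapP[t ht] /rcons_inj [-> //]|h]; by right; apply: map_f.
apply/orP/idP => [[] /mapP[t ht] /rcons_inj [-> //]|h]; by left; apply: map_f.
Qed.

Lemma uniq_allseq m : uniq (allseq m).
Proof.
elim: m => [|m IH] //=; rewrite cat_uniq !map_inj_uniq ?IH //=; try exact: rcons_injl.
rewrite andbT; apply/hasPn => s /mapP[t _ ->]; apply/mapP => [[u _ /rcons_inj []]] //.
Qed.

Lemma seq_of_inj n : injective (@seq_of n).
Proof.
move=> F G E; apply/setP => x; by rewrite -!B_seq_of E.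
Qed.

Lemma perm_allseq n : perm_eq [seq seq_of F | F <- index_enum {set 'I_n}] (allseq n).
Proof.
apply: uniq_perm; first by rewrite map_inj_uniq ?index_enum_uniq //; exact: seq_of_inj.
  exact: uniq_allseq.
move=> s; rewrite mem_allseq; apply/mapP/eqP => [[F _ ->]|hs].
  exact: size_seq_of.
exists [set x : 'I_n | B s x]; first by rewrite mem_index_enum.
apply: (@eq_from_nth _ false); first by rewrite size_seq_of.
move=> i; rewrite hs => hi.
rewrite /seq_of nth_mkseq // /bitF; apply/idP/existsP => [h|[x /andP[/eqP <-]]].
  by exists (Ordinal hi); rewrite /= eqxx inE.
by rewrite inE.
Qed.

Lemma d_count n k : d n k = count (fun s => filtL s && (degL s == k)) (allseq n).
Proof.
rewrite /d -sum1dep_card sum1_count -(permP (perm_allseq n)) count_map.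
apply: eq_in_count => F _ /=; rewrite -filt_seq.
by case fF: (is_filter F) => //; rewrite deg_seq.
Qed.
Definition pdeg (s : seq bool) : nat := (\sum_(i < (size s).-1) term s i)%N.
Definition edge2 (lr l c : bool) : bool := if lr then c ==> l else l ==> c.
Definition rightc2 (lr l c : bool) : bool := if l then (lr ==> ~~ c) else (~~ lr ==> c).
Definition leftc2 (lr l c : bool) : bool := if c then (~~ lr ==> ~~ l) else (lr ==> l).

Lemma BrL s c i : (i < size s)%N -> B (rcons s c) i = B s i.
Proof. by move=> h; rewrite /B nth_rcons h. Qed.

Lemma BrN s c : B (rcons s c) (size s) = c.
Proof. by rewrite /B nth_rcons ltnn eqxx. Qed.

Section Rc.
Variables (s : seq bool) (c : bool) (m : nat).
Hypothesis hs : size s = m.+1.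

Lemma B_rN : B (rcons s c) m.+1 = c.
Proof. by rewrite -hs BrN. Qed.

Lemma B_rL : B (rcons s c) m = B s m.
Proof. by rewrite BrL ?hs. Qed.

Lemma term_rL i : (i < m)%N -> term (rcons s c) i = term s i.
Proof.
move=> hi; rewrite /term /leftc /rightc size_rcons hs.
have h0 : (i < size s)%N by rewrite hs; lia.
have h1 : (i.-1 < size s)%N by rewrite hs; lia.
have h2 : (i.+1 < size s)%N by rewrite hs; lia.
rewrite (@BrL s c _ h0) (@BrL s c _ h1) (@BrL s c _ h2).
have -> : (i.+1 < m.+2)%N by lia.
by have -> : (i.+1 < m.+1)%N by lia.
Qed.

Lemma term_rN : term (rcons s c) m =
  leftc s m && rightc2 (lowerR m) (B s m) c.
Proof.
rewrite /term /leftc /rightc size_rcons hs.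
rewrite (@BrL s c _ (_ : m < size s)%N) ?hs //.
rewrite (@BrL s c _ (_ : m.-1 < size s)%N) ?hs //; last by lia.
rewrite B_rN ltnSn /rightc2.
by case: (B s m).
Qed.

Lemma leftc_rN : leftc (rcons s c) m.+1 = leftc2 (lowerR m) (B s m) c.
Proof.
rewrite /leftc B_rN /=.
rewrite (@BrL s c _ (_ : m < size s)%N) ?hs //.
Qed.

Lemma filt_r : filtL (rcons s c) = filtL s && edge2 (lowerR m) (B s m) c.
Proof.
rewrite /filtL size_rcons hs.
rewrite (_ : iota 0 m.+1 = iota 0 m ++ [:: m]); last by rewrite -addn1 iotaD.
rewrite all_cat /= andbT.
congr (_ && _).
  apply: eq_in_all => i; rewrite mem_iota add0n => /andP[_ hi].
  have h0 : (i < size s)%N by rewrite hs; lia.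
  have h2 : (i.+1 < size s)%N by rewrite hs; lia.
  by rewrite /edgeok (@BrL s c _ h0) (@BrL s c _ h2).
by rewrite /edgeok B_rL B_rN /edge2.
Qed.

Lemma pdeg_r : pdeg (rcons s c) =
  (pdeg s + (leftc s m && rightc2 (lowerR m) (B s m) c))%N.
Proof.
rewrite /pdeg size_rcons hs /= big_ord_recr /= term_rN; congr (_ + _)%N.
by apply: eq_bigr => i _; rewrite term_rL.
Qed.

Lemma degL_p : degL s = (pdeg s + leftc s m)%N.
Proof.
rewrite /degL /pdeg hs big_ord_recr /=; congr (_ + _)%N.
by rewrite /term /rightc hs ltnn /=; case: (B s m); rewrite andbT.
Qed.
End Rc.
Definition step (lr : bool) (W : bool -> bool -> {poly int}) (b ph : bool) : {poly int} :=
  let t l f := (if edge2 lr l b && (leftc2 lr l b == ph)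
                then 'X^(f && rightc2 lr l b) * W l f else 0) in
  t false false + t false true + t true false + t true true.

Fixpoint W' (m : nat) : bool -> bool -> {poly int} :=
  match m with
  | 0 => fun _ ph => if ph then 1 else 0
  | m'.+1 => step (lowerR m') (W' m')
  end.
Definition W (m : nat) : bool -> bool -> {poly int} :=
  match m with 0 => fun _ _ => 0 | m'.+1 => W' m' end.

Lemma WS m : W m.+2 = step (lowerR m) (W m.+1).
Proof. by []. Qed.

Lemma allseqS m : allseq m.+1 =
  [seq rcons s false | s <- allseq m] ++ [seq rcons s true | s <- allseq m].
Proof. by []. Qed.

Lemma dp m (h : bool -> bool -> {poly int}) :
  \sum_(s <- allseq m.+1 | filtL s) 'X^(pdeg s) * h (B s m) (leftc s m) =
  h false false * W m.+1 false false + h false true * W m.+1 false true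
  + h true false * W m.+1 true false + h true true * W m.+1 true true.
Proof.
elim: m h => [|m IH] h.
  rewrite /= !big_cons big_nil /= /pdeg /= !big_ord0 /=.
  by rewrite /leftc /B /=; ring.
pose lr := lowerR m.
pose h' l f := (if edge2 lr l false then 'X^(f && rightc2 lr l false) * h false (leftc2 lr l false) else 0)
  + (if edge2 lr l true then 'X^(f && rightc2 lr l true) * h true (leftc2 lr l true) else 0).
transitivity (\sum_(s <- allseq m.+1 | filtL s) 'X^(pdeg s) * h' (B s m) (leftc s m)).
  rewrite (allseqS m.+1) big_cat !big_map.
  rewrite [X in X + _ = _]big_mkcond [X in _ + X = _]big_mkcond [RHS]big_mkcond -big_split.
  rewrite big_seq [RHS]big_seq; apply: eq_bigr => s; rewrite mem_allseq => /eqP hs.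
  rewrite (filt_r s false m hs) (filt_r s true m hs) (pdeg_r s false m hs) (pdeg_r s true m hs).
  rewrite (B_rN s false m hs) (B_rN s true m hs) (leftc_rN s false m hs) (leftc_rN s true m hs) /h' -/lr.
  case: (filtL s) => /=; last by rewrite addr0.
  case: (edge2 lr (B s m) false); case: (edge2 lr (B s m) true); rewrite ?exprD; ring.
rewrite IH WS /h' /step /lr; clear h' lr.
move: (W m.+1) => w.
case: (lowerR m); rewrite /edge2 /leftc2 /rightc2 /=; ring.
Qed.
Definition Dp (n : nat) : {poly int} :=
  W n false false + 'X * W n false true + W n true false + 'X * W n true true.

Lemma sum_coef_count (l : seq (seq bool)) (P : pred (seq bool)) (f : seq bool -> nat) k :
  (\sum_(s <- l | P s) 'X^(f s) : {poly int})`_k = (count (fun s => P s && (f s == k)) l)%:Z.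
Proof.
elim: l => [|s l IH]; first by rewrite big_nil coef0.
rewrite big_cons /=; case: (P s) => /=; last by rewrite IH.
rewrite coefD IH coefXn eq_sym PoszD; by case: (f s == k).
Qed.

Lemma d_Dp n k : (d n.+1 k)%:Z = (Dp n.+1)`_k.
Proof.
rewrite d_count -sum_coef_count; congr (_`_k).
rewrite big_seq_cond.
rewrite (eq_bigr (fun s => 'X^(pdeg s) * (fun l f => 'X^f) (B s n) (leftc s n))); last first.
  move=> s /andP[]; rewrite mem_allseq => /eqP hs _.
  by rewrite (degL_p s n hs) exprD.
rewrite -big_seq_cond.
have := dp n (fun l f => 'X^f); rewrite /= => ->.
by rewrite /Dp expr0 expr1 !mul1r.
Qed.

Lemma Dp_rec m : Dp m.+4.+1 = 'X * (Dp m.+4 + Dp m.+3 + Dp m.+2) - 'X^2 * Dp m.+2.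
Proof.
rewrite /Dp (WS m.+3) (WS m.+2) (WS m.+1).
move: (W m.+2) => w.
have e1 : lowerR m.+1 = ~~ odd m by rewrite /lowerR /=.
have e2 : lowerR m.+2 = odd m by rewrite /lowerR /= negbK.
have e3 : lowerR m.+3 = ~~ odd m by rewrite /lowerR /= negbK.
rewrite e1 e2 e3 /step.
case: (odd m); rewrite /edge2 /leftc2 /rightc2 /=; ring.
Qed.

Lemma Dp2 : Dp 2 = 'X *+ 2 + 'X^2.
Proof. rewrite /Dp /= /step /=. ring. Qed.
Lemma Dp3 : Dp 3 = 'X *+ 2 + 'X^2 *+ 2.
Proof. rewrite /Dp /= /step /=. ring. Qed.
Lemma Dp4 : Dp 4 = 'X + 'X^2 *+ 3 + 'X^3 *+ 3.
Proof. rewrite /Dp /= /step /=. ring. Qed.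
Definition bz (a b : int) : int :=
  match b with
  | Negz _ => 0
  | Posz b' => match a with
               | Posz a' => ('C(a', b'))%:Z
               | Negz c => (-1) ^+ b' * ('C(c + b', b'))%:Z
               end
  end.
Lemma binzE a b : binz a b = bz a b.
Proof. by case: b => [b|b] //; case: a => [a|a]; rewrite ?binz_pos ?binz_nega. Qed.
Definition gz (n k j : int) : int :=
  bz (j + 1) (n - k - j) *
     (bz (n - 2 * j - 1) (k - j) + bz (n - 2 * j - 3) (k - j - 2)).
Lemma S_gz n k : S n k = \sum_(0 <= j < k.+1) gz n k j.
Proof. by apply: eq_bigr => j _; rewrite /g /gz !binzE. Qed.

Lemma d_rec0 m : (d m.+4.+1 0)%:Z = 0.
Proof. by rewrite d_Dp Dp_rec coefB !coefXM expr2 -mulrA coefXM /= subr0. Qed.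

Lemma d_rec1 m : (d m.+4.+1 1)%:Z = (d m.+4 0)%:Z + (d m.+3 0)%:Z + (d m.+2 0)%:Z.
Proof.
rewrite !d_Dp Dp_rec coefB expr2 -mulrA !coefXM /= !coefD subr0; ring.
Qed.

Lemma d_rec2 m k : (d m.+4.+1 k.+2)%:Z =
  (d m.+4 k.+1)%:Z + (d m.+3 k.+1)%:Z + (d m.+2 k.+1)%:Z - (d m.+2 k)%:Z.
Proof.
rewrite !d_Dp Dp_rec coefB expr2 -mulrA !coefXM /= !coefD; ring.
Qed.

Lemma base2 k : (d 2 k)%:Z = S 2 k.
Proof.
rewrite d_Dp Dp2 coefD coefMn coefX coefXn.
case: k => [|[|[|k]]]; try by rewrite S_gz unlock; vm_compute.
by rewrite S_big //= mul0rn addr0.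
Qed.

Lemma base3 k : (d 3 k)%:Z = S 3 k.
Proof.
rewrite d_Dp Dp3 coefD !coefMn coefX coefXn.
case: k => [|[|[|[|k]]]]; try by rewrite S_gz unlock; vm_compute.
by rewrite S_big //= mul0rn addr0.
Qed.

Lemma base4 k : (d 4 k)%:Z = S 4 k.
Proof.
rewrite d_Dp Dp4 !coefD coefX !coefXn.
case: k => [|[|[|[|[|k]]]]]; try by rewrite S_gz unlock; vm_compute.
by rewrite S_big //= !addr0.
Qed.

Lemma main3 m : forall k, (d m.+2 k)%:Z = S m.+2 k /\ (d m.+3 k)%:Z = S m.+3 k
  /\ (d m.+4 k)%:Z = S m.+4 k.
Proof.
elim: m => [|m IH] k; first by rewrite base2 base3 base4.
have [_ [H1 H2]] := IH k; split => //; split => //; clear H1 H2.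
case: k => [|[|k]].
- by rewrite d_rec0 S_n0.
- rewrite d_rec1 S_n1 //.
  have [A [B C]] := IH 0%N.
  by rewrite A B C !S_n0.
- rewrite d_rec2 S_rec //.
  have [A1 [B1 C1]] := IH k.+1; have [A0 _] := IH k.
  by rewrite A1 B1 C1 A0.
Qed.

Theorem mainTheorem17 (n k : nat) (hn : (2 <= n)%N) :
  (d n k)%:Z =
  \sum_(0 <= j < k.+1)
     binz (j%:Z + 1) (n%:Z - k%:Z - j%:Z) *
     (binz (n%:Z - 2 * j%:Z - 1) (k%:Z - j%:Z)
      + binz (n%:Z - 2 * j%:Z - 3) (k%:Z - j%:Z - 2)).
Proof.
change ((d n k)%:Z = S n k).
case: n hn => [|[|m]] // _.
by have [-> _] := main3 m k.
Qed.
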